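(* Let $\mathcal{D}$ be a domain, $G<\mathrm{IET}(\mathcal{D})$ a subgroup, and $a\in G$ a stable element with irreducible components $I_1,\dots,I_n$. Assume that for all $g\in G$, $gag^{-1}$ commutes with $a$. Then for each $i\leq n$, the collection $\{g(I_i): g\in G\}$ is a finite collection of pairwise disjoint subdomains (i.e. for $g,h\in G$, either $g(I_i)=h(I_i)$ or $g(I_i)\cap h(I_i)=\emptyset$).
   Context: A domain is a non-empty disjoint union of finitely many oriented circles and oriented half-open bounded intervals closed on the left; a subdomain is a subset that is itself a domain. $\mathrm{IET}(\mathcal{D})$ is the group of bijections of $\mathcal{D}$ that are orientation-preserving piecewise isometries, left-continuous, with finitely many discontinuity points. For a finitely generated $H<\mathrm{IET}(\mathcal{D})$: $H$ is irreducible on an $H$-invariant subdomain $J$ if every $H$-orbit in $J$ is dense in $J$; the irreducible components of $H$ are the members of the unique finite collection of pairwise disjoint $H$-invariant subdomains on each of which $H$ is irreducible and such that $H$ acts as a finite group on the complement of their union. $H$ is stable if every subdomain invariant under a finite index subgroup of $H$ is $H$-invariant. An element $a$ is stable if $\langle a\rangle$ is stable, and its irreducible components are those of $\langle a\rangle$. *)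

(* Defs.v *)
From Stdlib Require Import Reals List.
Open Scope R_scope.

(* A domain: finitely many (ncomp >= 1) components; component k has length
   len k > 0 and is a circle R/(len k)Z if circ k = true, otherwise the
   half-open interval [0, len k).  Points are (k, x) with 0 <= x < len k;
   on a circle the coordinate x is taken modulo len k. *)
Record domain := {
  ncomp : nat;
  len : nat -> R;
  circ : nat -> bool;
  ncomp_pos : (0 < ncomp)%nat;
  len_pos : forall k, (k < ncomp)%nat -> 0 < len k }.

Definition inD (D : domain) (p : nat * R) : Prop :=
  (fst p < ncomp D)%nat /\ 0 <= snd p < len D (fst p).

Definition pt (D : domain) := { p : nat * R | inD D p }.

Definition comp {D} (p : pt D) : nat := fst (proj1_sig p).
Definition coord {D} (p : pt D) : R := snd (proj1_sig p).

Definition wrap (D : domain) (k : nat) (x : R) : R :=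
  if circ D k then x - len D k * IZR (Int_part (x / len D k)) else x.

Definition cdist (D : domain) (k : nat) (x y : R) : R :=
  if circ D k then Rmin (Rabs (x - y)) (len D k - Rabs (x - y)) else Rabs (x - y).

Definition bij {D} (f : pt D -> pt D) : Prop :=
  exists g : pt D -> pt D, (forall p, g (f p) = p) /\ (forall p, f (g p) = p).

Record piece := { src : nat; lo : R; hi : R; tgt : nat; shift : R }.

Definition in_piece {D} (pc : piece) (p : pt D) : Prop :=
  comp p = src pc /\ lo pc <= coord p < hi pc.

(* IET(D): bijections that are orientation-preserving piecewise isometries,
   continuous on finitely many left-closed pieces (hence finitely many
   discontinuity points): on each piece [c,d) the map is a translation. *)
Definition is_IET {D} (f : pt D -> pt D) : Prop :=
  bij f /\
  exists pieces : list piece,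
    (forall p : pt D, exists pc, In pc pieces /\ in_piece pc p) /\
    (forall pc, In pc pieces -> forall p, in_piece pc p ->
       comp (f p) = tgt pc /\ coord (f p) = wrap D (tgt pc) (coord p + shift pc)).

Definition pset D := pt D -> Prop.
Definition seteq {D} (A B : pset D) : Prop := forall p, A p <-> B p.
Definition disjoint {D} (A B : pset D) : Prop := forall p, ~ (A p /\ B p).
Definition image {D} (g : pt D -> pt D) (A : pset D) : pset D :=
  fun p => exists q, A q /\ p = g q.

Definition subdomain {D} (J : pset D) : Prop :=
  (exists p, J p) /\
  exists l : list (nat * R * R),
    forall p, J p <-> exists kcd, In kcd l /\
      comp p = fst (fst kcd) /\ snd (fst kcd) <= coord p < snd kcd.

Definition is_subgroup {D} (H : (pt D -> pt D) -> Prop) : Prop :=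
  H (fun p => p) /\
  (forall g h, H g -> H h -> H (fun p => g (h p))) /\
  (forall g, H g -> exists h, H h /\ (forall p, h (g p) = p) /\ (forall p, g (h p) = p)).

Definition subgroup_of {D} (K H : (pt D -> pt D) -> Prop) : Prop :=
  is_subgroup K /\ forall k, K k -> H k.

Definition finite_index {D} (K H : (pt D -> pt D) -> Prop) : Prop :=
  exists l : list (pt D -> pt D),
    (forall g, In g l -> H g) /\
    forall h, H h -> exists g k, In g l /\ K k /\ forall p, h p = g (k p).

Definition cyclic {D} (a : pt D -> pt D) : (pt D -> pt D) -> Prop :=
  fun g => forall H, is_subgroup H -> H a -> H g.

Definition invariant {D} (H : (pt D -> pt D) -> Prop) (J : pset D) : Prop :=
  forall h, H h -> seteq (image h J) J.

Definition dense_in {D} (A J : pset D) : Prop :=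
  forall q, J q -> forall eps, 0 < eps ->
    exists r, A r /\ comp r = comp q /\ cdist D (comp q) (coord r) (coord q) < eps.

Definition orbit {D} (H : (pt D -> pt D) -> Prop) (p : pt D) : pset D :=
  fun r => exists h, H h /\ r = h p.

Definition irreducible_on {D} (H : (pt D -> pt D) -> Prop) (J : pset D) : Prop :=
  invariant H J /\ forall p, J p -> dense_in (orbit H p) J.

Definition stable {D} (H : (pt D -> pt D) -> Prop) : Prop :=
  forall K, subgroup_of K H -> finite_index K H ->
    forall J, subdomain J -> invariant K J -> invariant H J.

Definition irreducible_components {D} (H : (pt D -> pt D) -> Prop)
    (Is : list (pset D)) : Prop :=
  (forall I, In I Is -> subdomain I /\ invariant H I /\ irreducible_on H I) /\
  (forall i j, (i < length Is)%nat -> (j < length Is)%nat -> i <> j ->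
     disjoint (nth i Is (fun _ => False)) (nth j Is (fun _ => False))) /\
  (* H acts as a finite group on the complement of the union *)
  (exists l : list (pt D -> pt D),
     forall h, H h -> exists f, In f l /\
       forall p, (forall I, In I Is -> ~ I p) -> h p = f p).

(* Main.v *)
Require Import Defs.
From Stdlib Require Import Reals List.
From Stdlib Require Import Lra Lia ZArith Classical FunctionalExtensionality PropExtensionality ProofIrrelevance ClassicalEpsilon.
Open Scope R_scope.
Notation comp := Defs.comp (only parsing).

Section Basics.
Variable D : domain.

Lemma pt_ext (p q : pt D) : proj1_sig p = proj1_sig q -> p = q.
Proof.
  destruct p as [p0 Hp]; destruct q as [q0 Hq]; simpl; intros Heq; subst q0.
  f_equal; apply proof_irrelevance.
Qed.

Lemma pt_eq (p q : pt D) : comp p = comp q -> coord p = coord q -> p = q.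
Proof.
  intros H1 H2; apply pt_ext; unfold comp, coord in *.
  destruct (proj1_sig p), (proj1_sig q); simpl in *; subst; reflexivity.
Qed.

Definition mkpt (k : nat) (x : R) (Hk : (k < ncomp D)%nat) (Hx : 0 <= x < len D k) : pt D :=
  exist _ (k, x) (conj Hk Hx).

Lemma comp_lt (p : pt D) : (comp p < ncomp D)%nat.
Proof. destruct p as [[k x] [H1 H2]]; exact H1. Qed.

Lemma coord_bnd (p : pt D) : 0 <= coord p < len D (comp p).
Proof. destruct p as [[k x] [H1 H2]]; exact H2. Qed.

Lemma set_ext (A B : pset D) : (forall p, A p <-> B p) -> A = B.
Proof. intros H; extensionality p; apply propositional_extensionality; apply H. Qed.

Definition arcs_of (l : list (nat * R * R)) (p : pt D) : Prop :=
  exists kcd, In kcd l /\ comp p = fst (fst kcd) /\ snd (fst kcd) <= coord p < snd kcd.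

Definition au (J : pset D) : Prop := exists l, forall p, J p <-> arcs_of l p.

Lemma subdomain_au J : subdomain J -> au J.
Proof. intros [_ H]; exact H. Qed.

Lemma rnbhd J p : au J -> J p -> exists d, 0 < d /\ coord p + d <= len D (comp p) /\
  forall q, comp q = comp p -> coord p <= coord q < coord p + d -> J q.
Proof.
  intros [l Hl] Hp. destruct (proj1 (Hl p) Hp) as [[[k c] e] [Hin [Hk Hc]]]; simpl in *.
  pose proof (coord_bnd p) as Hb.
  exists (Rmin (e - coord p) (len D (comp p) - coord p)). split; [|split].
  - apply Rmin_glb_lt; lra.
  - pose proof (Rmin_r (e - coord p) (len D (comp p) - coord p)); lra.
  - intros q Hq Hq2. apply Hl. exists (k, c, e); simpl; split; [exact Hin|split; [congruence|]].
    pose proof (Rmin_l (e - coord p) (len D (comp p) - coord p)); lra.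
Qed.

Lemma cdist_small k x y eps : cdist D k x y < eps -> 0 <= x < len D k -> eps <= y -> eps <= len D k - y ->
  Rabs (x - y) < eps.
Proof.
  unfold cdist; destruct (circ D k); [|tauto].
  intros H Hx Hy1 Hy2. unfold Rmin in H. destruct (Rle_dec _ _) as [Hle|Hle]; [exact H|].
  exfalso. unfold Rabs in *; destruct (Rcase_abs (x - y)); lra.
Qed.

Lemma absorb (H : (pt D -> pt D) -> Prop) (I J : pset D) p :
  (forall h, H h -> forall x y, h x = h y -> x = y) ->
  invariant H J -> au J -> au I -> (forall q, I q -> dense_in (orbit H q) I) ->
  I p -> J p -> forall q, I q -> J q.
Proof.
  intros Hinj Hinv HJ HI Hd Ip Jp q Iq.
  destruct (rnbhd J p HJ Jp) as [d1 [Hd1 [Hl1 HJ1]]].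
  destruct (rnbhd I p HI Ip) as [d2 [Hd2 [Hl2 HI2]]].
  set (d := Rmin d1 d2).
  assert (Hd0 : 0 < d) by (apply Rmin_glb_lt; lra).
  assert (Hdd1 : d <= d1) by apply Rmin_l.
  assert (Hdd2 : d <= d2) by apply Rmin_r.
  pose proof (coord_bnd p) as Hb.
  assert (Hx : 0 <= coord p + d/2 < len D (comp p)) by lra.
  set (p' := mkpt (comp p) (coord p + d/2) (comp_lt p) Hx).
  assert (Ip' : I p') by (apply HI2; simpl; unfold p', comp, coord; simpl; [reflexivity|lra]).
  destruct (Hd q Iq p' Ip' (d/2)) as [r [[h [Hh ->]] [Hc Hdist]]]; [lra|].
  assert (Hcp : comp p' = comp p) by reflexivity.
  assert (Hco : coord p' = coord p + d/2) by reflexivity.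
  rewrite Hcp in Hc, Hdist.
  pose proof (coord_bnd (h q)) as Hbr. rewrite Hc in Hbr.
  pose proof (cdist_small _ _ _ _ Hdist Hbr) as Ha. rewrite Hco in Ha.
  assert (Hr : J (h q)).
  { apply HJ1; [exact Hc|]. assert (Habs: Rabs (coord (h q) - (coord p + d / 2)) < d / 2) by (apply Ha; lra).
    unfold Rabs in Habs; destruct (Rcase_abs _); lra. }
  destruct (proj2 (Hinv h Hh (h q)) Hr) as [q' [Jq' Heq]].
  rewrite (Hinj h Hh _ _ Heq); exact Jq'.
Qed.

Lemma avoid (xs : list R) u v : u < v -> exists u' v', u <= u' /\ u' < v' /\ v' <= v /\
  forall x, In x xs -> ~ (u' < x < v').
Proof.
  induction xs as [|x xs IH]; intros Huv.
  - exists u, v; repeat split; try lra. intros x [].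
  - destruct (IH Huv) as [u' [v' [H1 [H2 [H3 H4]]]]].
    destruct (classic (u' < x < v')) as [Hx|Hx].
    + exists u', x; repeat split; try lra. intros y [<-|Hy]; [lra|].
      intros Hy'. apply (H4 y Hy); lra.
    + exists u', v'; repeat split; try lra. intros y [<-|Hy]; [exact Hx|apply H4; exact Hy].
Qed.

Lemma finite_not_dense (F : list (pt D)) (J : pset D) :
  au J -> (exists p, J p) -> dense_in (fun r => In r F) J -> False.
Proof.
  intros HJ [p Jp] Hd.
  destruct (rnbhd J p HJ Jp) as [d [Hd0 [Hl HJ1]]].
  pose proof (coord_bnd p) as Hb.
  destruct (avoid (map coord F) (coord p) (coord p + d)) as [u [v [H1 [H2 [H3 H4]]]]]; [lra|].
  assert (Hx : 0 <= (u + v)/2 < len D (comp p)) by lra.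
  set (q := mkpt (comp p) ((u + v)/2) (comp_lt p) Hx).
  assert (Hcq : comp q = comp p) by reflexivity.
  assert (Hco : coord q = (u+v)/2) by reflexivity.
  assert (Jq : J q) by (apply HJ1; [exact Hcq|rewrite Hco; lra]).
  destruct (Hd q Jq ((v - u)/2)) as [r [Fr [Hc Hdist]]]; [lra|].
  rewrite Hcq in Hc, Hdist. rewrite Hco in Hdist.
  pose proof (coord_bnd r) as Hbr. rewrite Hc in Hbr.
  pose proof (cdist_small _ _ _ _ Hdist Hbr) as Ha.
  assert (Habs : Rabs (coord r - (u + v) / 2) < (v - u) / 2) by (apply Ha; lra).
  apply (H4 (coord r)); [apply in_map; exact Fr|].
  unfold Rabs in Habs; destruct (Rcase_abs _); lra.
Qed.

End Basics.

Section Grp.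
Variable D : domain.

Definition invp (f g : pt D -> pt D) := (forall p, g (f p) = p) /\ (forall p, f (g p) = p).

Lemma bij_inj (f : pt D -> pt D) : bij f -> forall x y, f x = f y -> x = y.
Proof. intros [g [H1 H2]] x y H. rewrite <- (H1 x), <- (H1 y), H; reflexivity. Qed.

Lemma bij_subgroup : is_subgroup (@bij D).
Proof.
  split; [|split].
  - exists (fun p => p); split; reflexivity.
  - intros g h [gi [G1 G2]] [hi [H1 H2]]. exists (fun p => hi (gi p)); split; intros p.
    + rewrite G1; apply H1.
    + rewrite H2; apply G2.
  - intros g [gi [G1 G2]]. exists gi; split; [exists g; split; assumption|split; assumption].
Qed.

Lemma image_comp (g h : pt D -> pt D) S : image (fun p => g (h p)) S = image g (image h S).
Proof.
  apply set_ext; intros p; split.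
  - intros [q [Sq ->]]. exists (h q); split; [exists q; split; [exact Sq|reflexivity]|reflexivity].
  - intros [q [[q' [Sq' ->]] ->]]. exists q'; split; [exact Sq'|reflexivity].
Qed.

Lemma image_id S : image (fun p : pt D => p) S = S.
Proof. apply set_ext; intros p; split; [intros [q [Sq ->]]; exact Sq|intros Sp; exists p; split; auto]. Qed.

Lemma image_ext (g h : pt D -> pt D) S : (forall p, g p = h p) -> image g S = image h S.
Proof. intros H. replace g with h; [reflexivity|]. extensionality p; symmetry; apply H. Qed.

Lemma image_invp (f g : pt D -> pt D) S : invp f g -> image g (image f S) = S.
Proof. intros [H1 H2]. rewrite <- image_comp. rewrite (image_ext _ (fun p => p)); [apply image_id|exact H1]. Qed.

Lemma image_inj_eq (f : pt D -> pt D) A B : bij f -> image f A = image f B -> A = B.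
Proof.
  intros [g [H1 H2]] H. rewrite <- (image_invp f g A), <- (image_invp f g B); [|split; assumption|split; assumption].
  rewrite H; reflexivity.
Qed.

Lemma inv_in_subgroup (H : (pt D -> pt D) -> Prop) h hi :
  is_subgroup H -> H h -> invp h hi -> H hi.
Proof.
  intros [_ [_ Hinv]] Hh [E1 E2]. destruct (Hinv h Hh) as [h' [Hh' [F1 F2]]].
  replace hi with h'; [exact Hh'|]. extensionality p.
  rewrite <- (F1 (hi p)). rewrite E2. reflexivity.
Qed.

Variable a : pt D -> pt D.
Hypothesis bija : bij a.

Lemma cyc_sub (P : (pt D -> pt D) -> Prop) h : is_subgroup P -> P a -> cyclic a h -> P h.
Proof. intros H1 H2 H3; exact (H3 P H1 H2). Qed.

Lemma cyc_a : cyclic a a. Proof. intros H _ Ha; exact Ha. Qed.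
Lemma cyc_id : cyclic a (fun p => p). Proof. intros H [Hid _] _; exact Hid. Qed.
Lemma cyc_compose g h : cyclic a g -> cyclic a h -> cyclic a (fun p => g (h p)).
Proof. intros Hg Hh H HH Ha. pose proof HH as [_ [Hc _]]. apply Hc; [apply Hg|apply Hh]; auto. Qed.

Lemma cyc_bij h : cyclic a h -> bij h.
Proof. intros Hh; apply (cyc_sub (@bij D)); auto using bij_subgroup. Qed.

Lemma cyc_inj h : cyclic a h -> forall x y, h x = h y -> x = y.
Proof. intros Hh; apply bij_inj, cyc_bij, Hh. Qed.

Lemma cyc_inv h hi : cyclic a h -> invp h hi -> cyclic a hi.
Proof. intros Hh Hi H HH Ha. apply (inv_in_subgroup H h hi HH); [apply Hh; assumption|exact Hi]. Qed.

Lemma cyc_subgroup : is_subgroup (cyclic a).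
Proof.
  split; [exact cyc_id|split; [exact cyc_compose|]].
  intros g Hg. destruct (cyc_bij g Hg) as [gi [G1 G2]]. exists gi; split; [|split; assumption].
  apply (cyc_inv g); [exact Hg|split; assumption].
Qed.

Lemma cyc_comm (c : pt D -> pt D) : (forall p, a (c p) = c (a p)) ->
  forall h, cyclic a h -> forall p, h (c p) = c (h p).
Proof.
  intros Hac h Hh.
  set (P := fun h : pt D -> pt D => bij h /\ forall p, h (c p) = c (h p)).
  assert (HP : is_subgroup P).
  { split; [|split].
    - split; [exists (fun p => p); split; reflexivity|reflexivity].
    - intros g k [Bg Cg] [Bk Ck]. split.
      + apply (proj1 (proj2 bij_subgroup)); assumption.
      + intros p; rewrite Ck, Cg; reflexivity.
    - intros g [Bg Cg]. destruct Bg as [gi [G1 G2]]. exists gi; split; [|split; assumption].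
      split; [exists g; split; assumption|].
      intros p. apply (bij_inj g); [exists gi; split; assumption|].
      rewrite G2, Cg, G2; reflexivity. }
  apply (cyc_sub P h HP); [split; [exact bija|exact Hac]|exact Hh].
Qed.

Lemma inv_comm (c ci : pt D -> pt D) : invp c ci -> (forall p, a (c p) = c (a p)) ->
  forall p, a (ci p) = ci (a p).
Proof.
  intros [C1 C2] Hc p. apply (bij_inj c); [exists ci; split; assumption|].
  rewrite C2, <- Hc, C2; reflexivity.
Qed.

Lemma image_invariant (c : pt D -> pt D) (I : pset D) : (forall p, a (c p) = c (a p)) ->
  invariant (cyclic a) I -> invariant (cyclic a) (image c I).
Proof.
  intros Hc HI h Hh p. pose proof (cyc_comm c Hc h Hh) as Hhc. split.
  - intros [q [[q' [Iq' ->]] ->]]. rewrite Hhc. exists (h q'); split; [|reflexivity].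
    apply (HI h Hh). exists q'; split; auto.
  - intros [q [Iq ->]]. destruct (proj2 (HI h Hh q) Iq) as [q' [Iq' ->]].
    rewrite <- Hhc. exists (c q'); split; [exists q'; split; auto|reflexivity].
Qed.

Variable Is : list (pset D).
Hypothesis Hcomp : irreducible_components (cyclic a) Is.

Lemma comp_au I : In I Is -> au D I.
Proof. intros H. apply subdomain_au, (proj1 Hcomp I H). Qed.
Lemma comp_ne I : In I Is -> exists p, I p.
Proof. intros H. apply (proj1 Hcomp I H). Qed.
Lemma comp_inv I : In I Is -> invariant (cyclic a) I.
Proof. intros H. apply (proj1 Hcomp I H). Qed.
Lemma comp_dense I : In I Is -> forall q, I q -> dense_in (orbit (cyclic a) q) I.
Proof. intros H. apply (proj1 Hcomp I H). Qed.

Lemma swap_eq (F Fi : pt D -> pt D) I1 I2 : invp F Fi -> In I1 Is -> In I2 Is ->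
  au D (image F I1) -> au D (image Fi I2) ->
  invariant (cyclic a) (image F I1) -> invariant (cyclic a) (image Fi I2) ->
  (exists p, image F I1 p /\ I2 p) -> image F I1 = I2.
Proof.
  intros [E1 E2] H1 H2 A1 A2 V1 V2 [p [Jp I2p]].
  pose proof (absorb D (cyclic a) I2 (image F I1) p cyc_inj V1 A1 (comp_au I2 H2) (comp_dense I2 H2) I2p Jp) as S1.
  destruct Jp as [q [I1q ->]].
  assert (Hq : image Fi I2 q) by (exists (F q); split; [exact I2p|symmetry; apply E1]).
  pose proof (absorb D (cyclic a) I1 (image Fi I2) q cyc_inj V2 A2 (comp_au I1 H1) (comp_dense I1 H1) I1q Hq) as S2.
  apply set_ext; intros x; split.
  - intros [y [I1y ->]]. destruct (S2 y I1y) as [z [I2z Hz]]. rewrite Hz, E2; exact I2z.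
  - intros I2x. apply S1, I2x.
Qed.

Lemma perm_comp (c ci : pt D -> pt D) : invp c ci -> (forall p, a (c p) = c (a p)) ->
  (forall I, In I Is -> au D (image c I)) -> (forall I, In I Is -> au D (image ci I)) ->
  forall I1, In I1 Is -> exists I2, In I2 Is /\ image c I1 = I2.
Proof.
  intros Hinv Hc Ac Aci I1 H1.
  pose proof (inv_comm c ci Hinv Hc) as Hci.
  destruct (classic (exists I2, In I2 Is /\ exists p, image c I1 p /\ I2 p)) as [[I2 [H2 Hp]]|Hno].
  - exists I2; split; [exact H2|]. apply (swap_eq c ci); auto.
    + apply image_invariant; [exact Hc|apply comp_inv; exact H1].
    + apply image_invariant; [exact Hci|apply comp_inv; exact H2].
  - exfalso. destruct (proj2 (proj2 Hcomp)) as [l Hl].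
    destruct (comp_ne I1 H1) as [q Iq].
    apply (finite_not_dense D (map (fun f => ci (f (c q))) l) I1 (comp_au I1 H1) (ex_intro _ q Iq)).
    intros x Ix eps Heps. destruct (comp_dense I1 H1 q Iq x Ix eps Heps) as [r [[h [Hh ->]] Hr]].
    exists (h q); split; [|exact Hr].
    destruct (Hl h Hh) as [f [Hf Hf2]]. apply in_map_iff. exists f; split; [|exact Hf].
    rewrite <- Hf2.
    + rewrite (cyc_comm c Hc h Hh). apply (proj1 Hinv).
    + intros I HI HIc. apply Hno. exists I; split; [exact HI|]. exists (c q); split; [|exact HIc].
      exists q; split; auto.
Qed.

End Grp.

Lemma NoDup_map_on {A B : Type} (F : A -> B) (s : list A) :
  (forall i j, In i s -> In j s -> F i = F j -> i = j) -> NoDup s -> NoDup (map F s).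
Proof.
  induction s as [|x s IH]; intros Hinj Hnd; simpl; [constructor|].
  inversion Hnd; subst. constructor.
  - intros Hin. apply in_map_iff in Hin. destruct Hin as [y [Hy Hy']].
    assert (y = x) by (apply Hinj; simpl; auto). subst; contradiction.
  - apply IH; auto. intros i j Hi Hj; apply Hinj; simpl; auto.
Qed.

Lemma pigeon {A : Type} (l : list A) (P : nat -> A -> Prop) :
  (forall t, (t <= length l)%nat -> exists x, In x l /\ P t x) ->
  exists t1 t2 x, (t1 < t2)%nat /\ (t2 <= length l)%nat /\ P t1 x /\ P t2 x.
Proof.
  intros H. destruct l as [|x0 l0] eqn:El.
  - destruct (H 0%nat) as [x [[] _]]; simpl; lia.
  - rewrite <- El in *.
    assert (H' : forall t, exists x, ((t <= length l)%nat -> In x l /\ P t x)).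
    { intros t. destruct (le_lt_dec t (length l)) as [Ht|Ht].
      - destruct (H t Ht) as [x Hx]. exists x; auto.
      - exists x0; intros; lia. }
    set (F := fun t => proj1_sig (constructive_indefinite_description _ (H' t))).
    assert (HF : forall t, (t <= length l)%nat -> In (F t) l /\ P t (F t)).
    { intros t; unfold F; destruct (constructive_indefinite_description _ _) as [x Hx]; simpl; auto. }
    apply NNPP; intros Hno.
    assert (Hnd : NoDup (map F (seq 0 (S (length l))))).
    { apply NoDup_map_on; [|apply seq_NoDup].
      intros i j Hi Hj Hij. apply in_seq in Hi; apply in_seq in Hj.
      destruct (lt_eq_lt_dec i j) as [[Hlt|Heq]|Hgt]; auto; exfalso; apply Hno.
      - exists i, j, (F i); repeat split; try lia; [apply HF; lia|rewrite Hij; apply HF; lia].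
      - exists j, i, (F j); repeat split; try lia; [apply HF; lia|rewrite <- Hij; apply HF; lia]. }
    assert (Hincl : incl (map F (seq 0 (S (length l)))) l).
    { intros y Hy. apply in_map_iff in Hy. destruct Hy as [t [<- Ht]]. apply in_seq in Ht. apply HF; lia. }
    pose proof (NoDup_incl_length Hnd Hincl) as Hlen. rewrite length_map, length_seq in Hlen. lia.
Qed.

Section Pw.
Variable D : domain.
Definition pw (f : pt D -> pt D) (n : nat) : pt D -> pt D := fun p => Nat.iter n f p.

Lemma pw_S f n p : pw f (S n) p = f (pw f n p). Proof. reflexivity. Qed.
Lemma pw_0 f p : pw f 0 p = p. Proof. reflexivity. Qed.
Lemma pw_add f n m p : pw f (n + m) p = pw f n (pw f m p).
Proof. induction n; simpl; [reflexivity|]. unfold pw in *; simpl; rewrite IHn; reflexivity. Qed.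
Lemma pw_Sr f n p : pw f (S n) p = pw f n (f p).
Proof. replace (S n) with (n + 1)%nat by lia. rewrite pw_add; reflexivity. Qed.
Lemma pw_comm f g : (forall p, f (g p) = g (f p)) -> forall n p, pw f n (g p) = g (pw f n p).
Proof. intros H n; induction n; intros p; [reflexivity|]. rewrite !pw_S, IHn, H; reflexivity. Qed.
Lemma pw_inv f g : invp D f g -> forall n p, pw g n (pw f n p) = p /\ pw f n (pw g n p) = p.
Proof.
  intros [H1 H2] n; induction n; intros p; [split; reflexivity|].
  split.
  - rewrite (pw_Sr g), (pw_S f), H1. apply IHn.
  - rewrite (pw_Sr f), (pw_S g), H2. apply IHn.
Qed.
Lemma pw_invp f g n : invp D f g -> invp D (pw f n) (pw g n).
Proof. intros H; split; intros p; apply (pw_inv f g H n p). Qed.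
Lemma pw_bij f n : bij f -> bij (pw f n).
Proof. intros [g [H1 H2]]. exists (pw g n). apply (pw_invp f g n); split; assumption. Qed.
Lemma cyc_pw a h n : cyclic a h -> cyclic a (pw h n).
Proof.
  intros Hh; induction n.
  - apply (cyc_id D a).
  - apply (cyc_compose D a h (pw h n)); assumption.
Qed.
Lemma pw_mul_pres f (J : pset D) : image f J = J -> forall q, image (pw f q) J = J.
Proof.
  intros H q; induction q.
  - apply (image_id D).
  - rewrite (image_ext D (pw f (S q)) (fun p => f (pw f q p))) by reflexivity.
    rewrite image_comp, IHq; exact H.
Qed.
End Pw.

Section Dyn.
Variable D : domain.
Variable a : pt D -> pt D.
Hypothesis bija : bij a.
Variable Is : list (pset D).
Hypothesis Hcomp : irreducible_components (cyclic a) Is.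

Lemma return_N (c ci : pt D -> pt D) : invp D c ci -> (forall p, a (c p) = c (a p)) ->
  (forall I, In I Is -> au D (image c I)) -> (forall I, In I Is -> au D (image ci I)) ->
  forall I1, In I1 Is -> exists N, (1 <= N)%nat /\ image (pw D c N) I1 = I1.
Proof.
  intros Hinv Hc Ac Aci I1 H1.
  assert (Ht : forall t, exists I', In I' Is /\ image (pw D c t) I1 = I').
  { induction t as [|t [I' [HI' Heq]]].
    - exists I1; split; [exact H1|]. apply (image_id D).
    - rewrite (image_ext D (pw D c (S t)) (fun p => c (pw D c t p))) by reflexivity.
      rewrite image_comp, Heq. apply (perm_comp D a bija Is Hcomp c ci); auto. }
  destruct (pigeon Is (fun t X => image (pw D c t) I1 = X)) as [t1 [t2 [X [Hlt [_ [E1 E2]]]]]].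
  { intros t _. apply Ht. }
  exists (t2 - t1)%nat; split; [lia|].
  apply (image_inj_eq D (pw D c t1)).
  - apply pw_bij. exists ci; exact Hinv.
  - rewrite <- image_comp, E1.
    rewrite (image_ext D _ (pw D c t2)); [exact E2|].
    intros p. rewrite <- pw_add. f_equal; lia.
Qed.

Variable ai : pt D -> pt D.
Hypothesis Hai : invp D a ai.

Lemma Hai' : invp D ai a.
Proof. split; [apply (proj2 Hai)|apply (proj1 Hai)]. Qed.

Lemma a_ai_comm n m p : pw D ai m (pw D a n p) = pw D a n (pw D ai m p).
Proof.
  apply pw_comm. intros q. symmetry. apply pw_comm. intros r.
  rewrite (proj1 Hai), (proj2 Hai); reflexivity.
Qed.

Lemma cyc_repr h : cyclic a h -> exists n m, forall p, h p = pw D a n (pw D ai m p).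
Proof.
  intros Hh.
  set (P := fun h : pt D -> pt D => exists n m, forall p, h p = pw D a n (pw D ai m p)).
  apply (cyc_sub D a P h); [|exists 1%nat, 0%nat; reflexivity|exact Hh].
  split; [|split].
  - exists 0%nat, 0%nat; reflexivity.
  - intros g k [n1 [m1 H1]] [n2 [m2 H2]]. exists (n1 + n2)%nat, (m1 + m2)%nat. intros p.
    rewrite H1, H2, a_ai_comm, !pw_add; reflexivity.
  - intros g [n [m H]]. exists (fun p => pw D a m (pw D ai n p)). split; [exists m, n; reflexivity|].
    split; intros p.
    + rewrite H, (proj1 (pw_inv D a ai Hai n _)), (proj2 (pw_inv D a ai Hai m p)); reflexivity.
    + rewrite H, (proj1 (pw_inv D a ai Hai m _)), (proj2 (pw_inv D a ai Hai n p)); reflexivity.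
Qed.

Lemma ai_cyc : cyclic a ai.
Proof. apply (cyc_inv D a a); [apply cyc_a|exact Hai]. Qed.

Lemma stab_apply (J : pset D) N : stable (cyclic a) -> subdomain J -> (1 <= N)%nat ->
  image (pw D a N) J = J -> invariant (cyclic a) J.
Proof.
  intros Hst HJ HN HaJ.
  set (K := fun h => cyclic a h /\ image h J = J).
  assert (HaiJ : image (pw D ai N) J = J).
  { rewrite <- HaJ at 1. rewrite <- image_comp. rewrite (image_ext D _ (fun p => p)); [apply (image_id D)|].
    intros p; apply (pw_inv D a ai Hai N p). }
  apply (Hst K).
  - split; [|intros k [Hk _]; exact Hk]. split; [|split].
    + split; [apply cyc_id|apply (image_id D)].
    + intros g h [Hg Eg] [Hh Eh]. split; [apply cyc_compose; assumption|]. rewrite image_comp, Eh; exact Eg.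
    + intros g [Hg Eg]. destruct (cyc_bij D a bija g Hg) as [gi [G1 G2]].
      exists gi. split; [|split; assumption]. split.
      * apply (cyc_inv D a g gi Hg); split; assumption.
      * rewrite <- Eg at 1. apply (image_invp D). split; assumption.
  - destruct N as [|N']; [lia|].
    exists (map (fun r => pw D a r) (seq 0 (S N'))). split.
    + intros g Hg. apply in_map_iff in Hg. destruct Hg as [r [<- _]]. apply cyc_pw, cyc_a.
    + intros h Hh. destruct (cyc_repr h Hh) as [n [m Hnm]].
      set (e := (n + N' * m)%nat).
      exists (pw D a (e mod (S N'))), (fun p => pw D a (S N' * (e / S N')) (pw D ai (S N' * m) p)).
      split; [|split].
      * apply in_map_iff. exists (e mod S N')%nat; split; [reflexivity|].
        apply in_seq. pose proof (Nat.mod_upper_bound e (S N')). lia.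
      * split.
        -- apply cyc_compose; apply cyc_pw; [apply cyc_a|apply ai_cyc].
        -- rewrite image_comp.
           rewrite (image_ext D (pw D ai (S N' * m)) (pw D (pw D ai (S N')) m)).
           2:{ intros p. clear. induction m; [rewrite Nat.mul_0_r; reflexivity|].
               replace (S N' * S m)%nat with (S N' + S N' * m)%nat by lia.
               rewrite pw_add, IHm. reflexivity. }
           rewrite (pw_mul_pres D _ J HaiJ m).
           rewrite (image_ext D (pw D a (S N' * _)) (pw D (pw D a (S N')) (e / S N'))).
           2:{ intros p. generalize (e / S N')%nat as q. clear. induction q; [rewrite Nat.mul_0_r; reflexivity|].
               replace (S N' * S q)%nat with (S N' + S N' * q)%nat by lia.
               rewrite pw_add, IHq. reflexivity. }
           apply (pw_mul_pres D _ J HaJ).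
      * intros p. rewrite <- pw_add.
        rewrite (Nat.add_comm (e mod S N')), <- Nat.div_mod by lia.
        unfold e. replace (S N' * m)%nat with (N' * m + m)%nat by lia.
        rewrite Hnm, (pw_add D a n), (pw_add D ai).
        rewrite (proj2 (pw_inv D a ai Hai _ _)). reflexivity.
  - exact HJ.
  - intros k [_ Ek] p. rewrite Ek; reflexivity.
Qed.

End Dyn.

Section MainDyn.
Variable D : domain.
Variable G : (pt D -> pt D) -> Prop.
Variable a : pt D -> pt D.
Variable Is : list (pset D).
Hypothesis HG : is_subgroup G.
Hypothesis HIET : forall g, G g -> is_IET g.
Hypothesis Ga : G a.
Hypothesis Hst : stable (cyclic a).
Hypothesis Hcomp : irreducible_components (cyclic a) Is.
Hypothesis Hcm : forall g ginv, G g -> (forall p, ginv (g p) = p) -> (forall p, g (ginv p) = p) ->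
     forall p, g (a (ginv (a p))) = a (g (a (ginv p))).
Hypothesis HAU : forall g, G g -> forall S, au D S -> au D (image g S).

Lemma G_inv g : G g -> exists gi, G gi /\ invp D g gi.
Proof. intros Hg. destruct (proj2 (proj2 HG) g Hg) as [h [Hh [H1 H2]]]. exists h; split; [exact Hh|split; assumption]. Qed.

Lemma G_comp g h : G g -> G h -> G (fun p => g (h p)).
Proof. apply (proj1 (proj2 HG)). Qed.

Lemma bija : bij a.
Proof. apply (HIET a Ga). Qed.

Lemma main_inv f I : G f -> In I Is -> invariant (cyclic a) (image f I).
Proof.
  intros Gf HI.
  destruct (G_inv f Gf) as [fi [Gfi [F1 F2]]].
  destruct (G_inv a Ga) as [ai [Gai Hai]].
  set (c := fun p => fi (a (f p))).
  set (ci := fun p => fi (ai (f p))).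
  assert (Gc : G c) by (unfold c; apply (G_comp fi (fun p => a (f p))); [exact Gfi|apply G_comp; assumption]).
  assert (Gci : G ci) by (unfold ci; apply (G_comp fi (fun p => ai (f p))); [exact Gfi|apply G_comp; assumption]).
  assert (Hinv : invp D c ci).
  { split; intros p; unfold c, ci.
    - rewrite F2, (proj1 Hai), F1; reflexivity.
    - rewrite F2, (proj2 Hai), F1; reflexivity. }
  assert (Hc : forall p, a (c p) = c (a p)).
  { intros p. symmetry. unfold c. apply (Hcm fi f Gfi F2 F1). }
  destruct (return_N D a bija Is Hcomp c ci Hinv Hc) with (I1 := I) as [N [HN HcN]]; auto.
  { intros J HJ. apply HAU; [exact Gc|apply (comp_au D a Is Hcomp J HJ)]. }
  { intros J HJ. apply HAU; [exact Gci|apply (comp_au D a Is Hcomp J HJ)]. }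
  apply (stab_apply D a bija ai Hai (image f I) N Hst); [| exact HN|].
  - split.
    + destruct (comp_ne D a Is Hcomp I HI) as [q Iq]. exists (f q), q; split; auto.
    + apply HAU; [exact Gf|apply (comp_au D a Is Hcomp I HI)].
  - rewrite <- image_comp.
    rewrite (image_ext D _ (fun p => f (pw D c N p))).
    + rewrite image_comp, HcN; reflexivity.
    + clear HcN HN. intros p. induction N as [|N IH]; [reflexivity|].
      rewrite !pw_S, IH. unfold c at 2. rewrite F2. reflexivity.
Qed.

Lemma concl3 g h I : G g -> G h -> In I Is -> image g I = image h I \/ disjoint (image g I) (image h I).
Proof.
  intros Gg Gh HI.
  destruct (classic (exists p, image g I p /\ image h I p)) as [[p [[x [Ix Ex]] [y [Iy Ey]]]]|Hno].
  - left.
    destruct (G_inv g Gg) as [gi [Ggi [Gi1 Gi2]]].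
    destruct (G_inv h Gh) as [hi [Ghi [Hi1 Hi2]]].
    set (F := fun p => hi (g p)). set (Fi := fun p => gi (h p)).
    assert (GF : G F) by (unfold F; apply G_comp; assumption).
    assert (GFi : G Fi) by (unfold Fi; apply G_comp; assumption).
    assert (Hinv : invp D F Fi).
    { split; intros q; unfold F, Fi; [rewrite Hi2, Gi1|rewrite Gi2, Hi1]; reflexivity. }
    assert (HFI : image F I = I).
    { apply (swap_eq D a bija Is Hcomp F Fi I I Hinv HI HI).
      - apply HAU; [exact GF|apply (comp_au D a Is Hcomp I HI)].
      - apply HAU; [exact GFi|apply (comp_au D a Is Hcomp I HI)].
      - apply main_inv; assumption.
      - apply main_inv; assumption.
      - exists y; split; [|exact Iy]. exists x; split; [exact Ix|]. unfold F. rewrite <- Ex, Ey, Hi1; reflexivity. }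
    rewrite <- HFI at 2. rewrite <- image_comp. apply image_ext. intros q; unfold F; rewrite Hi2; reflexivity.
  - right. intros p Hp. apply Hno. exists p; exact Hp.
Qed.

End MainDyn.

From mathcomp Require all_boot all_order all_algebra all_classical all_reals all_analysis Rstruct.

Lemma Rmax_plus_r a b s : Rmax (a + s) (b + s) = (Rmax a b + s)%R.
Proof. unfold Rmax; destruct (Rle_dec (a+s) (b+s)), (Rle_dec a b); lra. Qed.
Lemma Rmin_plus_r a b s : Rmin (a + s) (b + s) = (Rmin a b + s)%R.
Proof. unfold Rmin; destruct (Rle_dec (a+s) (b+s)), (Rle_dec a b); lra. Qed.

Module Meas.
From mathcomp Require Import all_boot all_order all_algebra.
From mathcomp Require Import all_classical all_reals all_analysis Rstruct.
Import Order.TTheory GRing.Theory Num.Theory.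
Local Open Scope classical_set_scope.
Local Open Scope ring_scope.

Definition MT := measurableTypeR R.
Definition lam (A : R -> Prop) : \bar R := lebesgue_measure (A : set MT).
Definition m (A : R -> Prop) : R := fine (lam A).
Definition U (l : list (R * R)) : R -> Prop :=
  fun x => exists cd, List.In cd l /\ Rle (fst cd) x /\ Rlt x (snd cd).

Lemma itvE (c d : R) : (fun x => Rle c x /\ Rlt x d) = [set` `[c, d[%R].
Proof.
apply/funext => x; apply/propext; rewrite /= in_itv /=; split.
- by move=> [/RleP -> /RltP ->].
- by move/andP=> [/RleP ? /RltP ?].
Qed.

Lemma U_cons cd l : U (cd :: l) = (fun x => Rle (fst cd) x /\ Rlt x (snd cd)) `|` U l.
Proof.
apply/funext => x; apply/propext; split.
- move=> [cd' [[<-|Hin] H]]; [by left | by right; exists cd'].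
- move=> [H|[cd' [Hin H]]]; [exists cd; split => //; left | exists cd'; split => //; right] => //.
Qed.

Lemma U_nil : U nil = set0.
Proof. by apply/funext => x; apply/propext; split => [[cd [[]]]|]. Qed.

Lemma meas_U l : measurable (U l : set MT).
Proof.
elim: l => [|cd l IH]; first by rewrite U_nil; exact: measurable0.
rewrite U_cons; apply: measurableU => //; rewrite itvE; exact: measurable_itv.
Qed.

Lemma lam_itv (c d : R) : lam (fun x => Rle c x /\ Rlt x d) = (if c < d then (d - c)%:E else 0%E).
Proof.
rewrite /lam itvE lebesgue_measure_itv /=; case: ifP => //= _; by rewrite EFinB.
Qed.

Lemma lam_U_fin l : (lam (U l) < +oo)%E.
Proof.
elim: l => [|cd l IH]; first by rewrite /lam U_nil measure0 ltry.
rewrite /lam U_cons; apply: (le_lt_trans (measureU2 _ _ _)).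
- rewrite itvE; exact: measurable_itv.
- exact: meas_U.
- rewrite lte_add_pinfty //.
  change (lam (fun x => Rle cd.1 x /\ Rlt x cd.2) < +oo)%E.
  rewrite lam_itv; case: ifP => _ //; exact: ltry.
Qed.

Lemma lam_U_ge0 l : (0 <= lam (U l))%E.
Proof. exact: measure_ge0. Qed.

Lemma lam_U_fin_num l : lam (U l) \is a fin_num.
Proof. by rewrite ge0_fin_numE ?lam_U_fin ?lam_U_ge0. Qed.

Lemma m_U_ge0 l : Rle 0 (m (U l)).
Proof. apply/RleP; rewrite /m; apply: fine_ge0; exact: lam_U_ge0. Qed.

Lemma U_app l1 l2 : U (l1 ++ l2) = U l1 `|` U l2.
Proof.
apply/funext => x; apply/propext; split.
- move=> [cd [H H']]; case: (List.in_app_or _ _ _ H) => H''; [left|right]; by exists cd.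
- move=> [[cd [H H']]|[cd [H H']]]; exists cd; split => //; apply List.in_or_app; tauto.
Qed.

Lemma m_U_app_disj l1 l2 : (forall x, ~ (U l1 x /\ U l2 x)) ->
  m (U (l1 ++ l2)) = Rplus (m (U l1)) (m (U l2)).
Proof.
move=> Hd; rewrite /m /lam U_app measureU.
- by rewrite fineD // ?lam_U_fin_num.
- exact: meas_U.
- exact: meas_U.
- by apply/funext => x; apply/propext; split => // -[? ?]; apply: (Hd x).
Qed.

Lemma m_U_le l1 l2 : (forall x, U l1 x -> U l2 x) -> Rle (m (U l1)) (m (U l2)).
Proof.
move=> Hs; apply/RleP; rewrite /m; apply: fine_le; rewrite ?lam_U_fin_num //.
apply: le_measure; rewrite ?inE; try exact: meas_U.
exact: Hs.
Qed.

Definition inter (cd cd' : R * R) : R * R := (Rmax cd.1 cd'.1, Rmin cd.2 cd'.2).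

Lemma U_inter cd l : (fun x => Rle cd.1 x /\ Rlt x cd.2) `&` U l = U (List.map (inter cd) l).
Proof.
apply/funext => x; apply/propext; split.
- move=> [[H1 H2] [cd' [Hin [H3 H4]]]]; exists (inter cd cd'); split.
  + exact: List.in_map.
  + rewrite /inter /=; split; [apply Rmax_lub | apply Rmin_glb_lt]; assumption.
- move=> [cd' [/List.in_map_iff [cd'' [<- Hin]] [H3 H4]]].
  move: H3 H4; rewrite /inter /= => H3 H4.
  split; [split|exists cd''; split => //; split].
  + exact: Rle_trans (Rmax_l _ _) H3.
  + exact: Rlt_le_trans H4 (Rmin_l _ _).
  + exact: Rle_trans (Rmax_r _ _) H3.
  + exact: Rlt_le_trans H4 (Rmin_r _ _).
Qed.

Lemma m_U_cons cd l : m (U (cd :: l)) =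
  Rminus (Rplus (m (fun x => Rle cd.1 x /\ Rlt x cd.2)) (m (U l))) (m (U (List.map (inter cd) l))).
Proof.
have Hi : measurable ((fun x => Rle cd.1 x /\ Rlt x cd.2) : set MT).
  by rewrite itvE; exact: measurable_itv.
have Hfi : lam (fun x => Rle cd.1 x /\ Rlt x cd.2) \is a fin_num.
  by rewrite lam_itv; case: ifP.
rewrite /m /lam U_cons measureUfinr //; last (by apply: lam_U_fin); last exact: meas_U.
rewrite -U_inter.
have HI : lebesgue_measure ((fun x => Rle cd.1 x /\ Rlt x cd.2) `&` U l : set MT) \is a fin_num.
  by rewrite U_inter; apply: lam_U_fin_num.
rewrite fineB // ?fineD // ?lam_U_fin_num //.
by rewrite fin_numD Hfi lam_U_fin_num.
Qed.

Definition sh (s : R) (cd : R * R) : R * R := (Rplus cd.1 s, Rplus cd.2 s).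

Lemma m_itv_sh c d s : m (fun x => Rle (Rplus c s) x /\ Rlt x (Rplus d s)) = m (fun x => Rle c x /\ Rlt x d).
Proof.
rewrite /m !lam_itv.
have -> : (Rplus c s < Rplus d s) = (c < d) by rewrite !RplusE ltrD2r.
case: ifP => // _; congr (fine (EFin _)); rewrite !RplusE; by rewrite opprD addrACA subrr addr0.
Qed.

Lemma map_inter_sh s cd l :
  List.map (sh s) (List.map (inter cd) l) = List.map (inter (sh s cd)) (List.map (sh s) l).
Proof.
elim: l => [|cd' l IH] //=; rewrite IH; congr (_ :: _).
rewrite /sh /inter /=; congr pair.
- by rewrite Rmax_plus_r.
- by rewrite Rmin_plus_r.
Qed.

Lemma m_U_sh_n n : forall l s, List.length l = n -> m (U (List.map (sh s) l)) = m (U l).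
Proof.
elim: n => [|n IH] [|cd l] s //= Hl.
case: Hl => Hl.
rewrite !m_U_cons IH // -map_inter_sh IH ?List.length_map //.
by rewrite /sh /= m_itv_sh.
Qed.

Lemma m_U_sh l s : m (U (List.map (sh s) l)) = m (U l).
Proof. exact: (m_U_sh_n (List.length l)). Qed.

Lemma m_itv_pos c d : Rlt c d -> m (U ((c, d) :: nil)) = Rminus d c.
Proof.
move=> H.
have -> : U ((c, d) :: nil) = (fun x => Rle c x /\ Rlt x d).
  rewrite U_cons U_nil; apply/funext => x; apply/propext; split; [case|left] => //.
rewrite /m lam_itv; by move/RltP: H => ->.
Qed.

Lemma m_ext (A B : R -> Prop) : (forall x, A x <-> B x) -> m A = m B.
Proof. move=> H; congr m; apply/funext => x; apply/propext; exact: H. Qed.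

Lemma m_U_nil : m (U nil) = 0%coqR.
Proof. by rewrite /m /lam U_nil measure0. Qed.

End Meas.


Open Scope R_scope.

Definition rsum (l : list R) : R := fold_right Rplus 0 l.

Lemma rsum_plus (f g : nat -> R) s : rsum (map (fun k => f k + g k) s) = rsum (map f s) + rsum (map g s).
Proof. induction s; simpl; [lra|]. unfold rsum in *; simpl; rewrite IHs; lra. Qed.

Lemma rsum_ext (f g : nat -> R) s : (forall k, In k s -> f k = g k) -> rsum (map f s) = rsum (map g s).
Proof. intros H; f_equal; apply map_ext_in; auto. Qed.

Lemma rsum_le (f g : nat -> R) s : (forall k, In k s -> f k <= g k) -> rsum (map f s) <= rsum (map g s).
Proof. induction s; intros H; simpl; [lra|]. unfold rsum in *; simpl. pose proof (H a (or_introl eq_refl)).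
  assert (rsum (map f s) <= rsum (map g s)) by (apply IHs; intros; apply H; simpl; auto). unfold rsum in *; lra. Qed.

Lemma rsum_single (f : nat -> R) k n a : (forall j, j <> k -> f j = 0) ->
  rsum (map f (seq a n)) = if (andb (Nat.leb a k) (Nat.ltb k (a + n))) then f k else 0.
Proof.
  intros Hf. revert a; induction n; intros a; simpl.
  - destruct (Nat.leb a k) eqn:E1, (Nat.ltb k (a + 0)) eqn:E2; simpl; auto.
    apply Nat.leb_le in E1; apply Nat.ltb_lt in E2; lia.
  - unfold rsum in *; simpl; rewrite IHn.
    destruct (Nat.eq_dec a k) as [->|Hne].
    + replace (Nat.leb (S k) k) with false by (symmetry; apply Nat.leb_gt; lia).
      replace (Nat.leb k k) with true by (symmetry; apply Nat.leb_le; lia).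
      replace (Nat.ltb k (k + S n)) with true by (symmetry; apply Nat.ltb_lt; lia). simpl; lra.
    + rewrite (Hf a Hne).
      destruct (Nat.leb (S a) k) eqn:E1, (Nat.ltb k (S a + n)) eqn:E2, (Nat.leb a k) eqn:E3, (Nat.ltb k (a + S n)) eqn:E4;
        simpl; try lra;
        repeat match goal with
        | H : Nat.leb _ _ = true |- _ => apply Nat.leb_le in H
        | H : Nat.leb _ _ = false |- _ => apply Nat.leb_gt in H
        | H : Nat.ltb _ _ = true |- _ => apply Nat.ltb_lt in H
        | H : Nat.ltb _ _ = false |- _ => apply Nat.ltb_ge in H
        end; lia.
Qed.

Lemma rsum_ge0 (f : nat -> R) s : (forall k, In k s -> 0 <= f k) -> 0 <= rsum (map f s).
Proof. intros H. pose proof (rsum_le (fun _ => 0) f s H). induction s; simpl in *; unfold rsum in *; simpl in *; [lra|].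
  assert (Hz : fold_right Rplus 0 (map (fun _ : nat => 0) s) = 0) by (clear; induction s; simpl; [reflexivity|rewrite IHs; lra]).
  lra. Qed.

Lemma rsum_ge_term (f : nat -> R) s k : (forall j, In j s -> 0 <= f j) -> In k s -> f k <= rsum (map f s).
Proof.
  induction s; intros H Hk; [destruct Hk|]. unfold rsum; simpl. destruct Hk as [->|Hk].
  - assert (0 <= rsum (map f s)) by (apply rsum_ge0; intros; apply H; simpl; auto). unfold rsum in *; lra.
  - assert (f a >= 0) by (apply Rle_ge, H; simpl; auto).
    assert (f k <= rsum (map f s)) by (apply IHs; auto; intros; apply H; simpl; auto). unfold rsum in *; lra.
Qed.

Section Measure.
Variable D : domain.

Definition slice (S : pset D) (k : nat) : R -> Prop := fun x => exists p, S p /\ comp p = k /\ coord p = x.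
Definition mu (S : pset D) : R := rsum (map (fun k => Meas.m (slice S k)) (seq 0 (ncomp D))).

Definition sl (l : list (nat * R * R)) (k : nat) : list (R * R) :=
  map (fun kcd => (Rmax (snd (fst kcd)) 0, Rmin (snd kcd) (len D k))) (filter (fun kcd => Nat.eqb (fst (fst kcd)) k) l).

Lemma slice_sl (S : pset D) l k : (forall p, S p <-> arcs_of D l p) -> (k < ncomp D)%nat ->
  forall x, slice S k x <-> Meas.U (sl l k) x.
Proof.
  intros HS Hk x; split.
  - intros [p [Sp [Hc <-]]]. destruct (proj1 (HS p) Sp) as [kcd [Hin [Hc' Hb]]].
    pose proof (coord_bnd D p) as Hp. rewrite Hc in Hp.
    exists (Rmax (snd (fst kcd)) 0, Rmin (snd kcd) (len D k)). split.
    + apply in_map_iff. exists kcd; split; [reflexivity|]. apply filter_In; split; [exact Hin|].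
      apply Nat.eqb_eq; congruence.
    + simpl. split; [apply Rmax_lub; lra|apply Rmin_glb_lt; lra].
  - intros [cd [Hin [H1 H2]]]. apply in_map_iff in Hin. destruct Hin as [kcd [<- Hin]].
    apply filter_In in Hin. destruct Hin as [Hin Hk']. apply Nat.eqb_eq in Hk'. simpl in *.
    pose proof (Rmax_l (snd (fst kcd)) 0). pose proof (Rmax_r (snd (fst kcd)) 0).
    pose proof (Rmin_l (snd kcd) (len D k)). pose proof (Rmin_r (snd kcd) (len D k)).
    assert (Hx : 0 <= x < len D k) by lra.
    exists (mkpt D k x Hk Hx). split; [|split; reflexivity].
    apply HS. exists kcd; split; [exact Hin|]. split; [exact (eq_sym Hk')|]. unfold coord, mkpt; simpl. split; lra.
Qed.

Lemma mu_repr (S : pset D) l : (forall p, S p <-> arcs_of D l p) ->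
  mu S = rsum (map (fun k => Meas.m (Meas.U (sl l k))) (seq 0 (ncomp D))).
Proof.
  intros HS. apply rsum_ext. intros k Hk. apply in_seq in Hk. apply Meas.m_ext. apply slice_sl; auto; lia.
Qed.

Lemma mu_ext (S T : pset D) : (forall p, S p <-> T p) -> mu S = mu T.
Proof. intros H. replace T with S; [reflexivity|]. apply set_ext; auto. Qed.

Lemma mu_ge0 (S : pset D) : au D S -> 0 <= mu S.
Proof. intros [l Hl]. rewrite (mu_repr S l Hl). apply rsum_ge0. intros; apply Meas.m_U_ge0. Qed.

Definition total : R := rsum (map (fun k => len D k) (seq 0 (ncomp D))).

Lemma mu_le_total (S : pset D) : au D S -> mu S <= total.
Proof.
  intros [l Hl]. rewrite (mu_repr S l Hl). apply rsum_le. intros k Hk. apply in_seq in Hk.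
  pose proof (len_pos D k ltac:(lia)) as Hlen.
  replace (len D k) with (len D k - 0) by lra. rewrite <- (Meas.m_itv_pos 0 (len D k)) by lra.
  apply Meas.m_U_le. intros x [cd [Hin [H1 H2]]]. apply in_map_iff in Hin. destruct Hin as [kcd [<- _]].
  simpl in *. exists (0, len D k); split; [left; reflexivity|]. simpl.
  pose proof (Rmax_r (snd (fst kcd)) 0). pose proof (Rmin_r (snd kcd) (len D k)). lra.
Qed.

Lemma mu_pos (S : pset D) : au D S -> (exists p, S p) -> 0 < mu S.
Proof.
  intros HS [p Sp]. destruct (rnbhd D S p HS Sp) as [d [Hd [Hl Hn]]].
  destruct HS as [l Hl']. rewrite (mu_repr S l Hl').
  pose proof (comp_lt D p) as Hk.
  assert (Hm : d <= Meas.m (Meas.U (sl l (comp p)))).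
  { replace d with ((coord p + d) - coord p) by lra. rewrite <- Meas.m_itv_pos by lra.
    apply Meas.m_U_le. intros x Hx. apply (slice_sl S l (comp p) Hl' Hk).
    destruct Hx as [cd [[<-|[]] [H1 H2]]]; simpl in *.
    pose proof (coord_bnd D p).
    assert (Hx : 0 <= x < len D (comp p)) by lra.
    exists (mkpt D (comp p) x Hk Hx). split; [|split; reflexivity].
    apply Hn; [reflexivity|unfold coord, mkpt; simpl; unfold coord in *; lra]. }
  assert (Meas.m (Meas.U (sl l (comp p))) <= rsum (map (fun k => Meas.m (Meas.U (sl l k))) (seq 0 (ncomp D)))).
  { apply (rsum_ge_term (fun k => Meas.m (Meas.U (sl l k)))); [intros; apply Meas.m_U_ge0|].
    apply in_seq; lia. }
  lra.
Qed.

Definition sunion (S T : pset D) : pset D := fun p => S p \/ T p.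

Lemma au_union S T : au D S -> au D T -> au D (sunion S T).
Proof.
  intros [l1 H1] [l2 H2]. exists (l1 ++ l2). intros p; split.
  - intros [Sp|Tp]; [destruct (proj1 (H1 p) Sp) as [kcd [Hin Hk]]|destruct (proj1 (H2 p) Tp) as [kcd [Hin Hk]]];
      exists kcd; split; auto; apply in_or_app; auto.
  - intros [kcd [Hin Hk]]. apply in_app_or in Hin. destruct Hin as [Hin|Hin]; [left; apply H1|right; apply H2];
      exists kcd; auto.
Qed.

Lemma mu_union S T : au D S -> au D T -> disjoint S T -> mu (sunion S T) = mu S + mu T.
Proof.
  intros [l1 H1] [l2 H2] Hd.
  assert (H12 : forall p, sunion S T p <-> arcs_of D (l1 ++ l2) p).
  { intros p; split.
    - intros [Sp|Tp]; [destruct (proj1 (H1 p) Sp) as [kcd [Hin Hk]]|destruct (proj1 (H2 p) Tp) as [kcd [Hin Hk]]];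
        exists kcd; split; auto; apply in_or_app; auto.
    - intros [kcd [Hin Hk]]. apply in_app_or in Hin. destruct Hin as [Hin|Hin]; [left; apply H1|right; apply H2];
        exists kcd; auto. }
  rewrite (mu_repr _ _ H12), (mu_repr _ _ H1), (mu_repr _ _ H2), <- rsum_plus.
  apply rsum_ext. intros k Hk. apply in_seq in Hk.
  replace (sl (l1 ++ l2) k) with (sl l1 k ++ sl l2 k) by (unfold sl; rewrite filter_app, map_app; reflexivity).
  apply Meas.m_U_app_disj. intros x [Hx1 Hx2].
  apply (slice_sl S l1 k H1 ltac:(lia)) in Hx1. apply (slice_sl T l2 k H2 ltac:(lia)) in Hx2.
  destruct Hx1 as [p [Sp [Hp1 Hp2]]], Hx2 as [q [Tq [Hq1 Hq2]]].
  assert (p = q) by (apply pt_eq; congruence). subst q. apply (Hd p); auto.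
Qed.

Lemma au_empty : au D (fun _ => False).
Proof. exists nil. intros p; split; [intros []|intros [kcd [[] _]]]. Qed.

Lemma mu_empty : mu (fun _ => False) = 0.
Proof.
  assert (Hn : forall p, (fun _ : pt D => False) p <-> arcs_of D nil p) by (intros p; split; [intros []|intros [kcd [[] _]]]).
  rewrite (mu_repr _ nil Hn).
  clear. induction (seq 0 (ncomp D)); simpl; [reflexivity|]. unfold rsum in *; simpl.
  rewrite IHl. unfold sl; simpl. rewrite Meas.m_U_nil. lra.
Qed.

End Measure.

Lemma Rmax_le_iff a b x : Rmax a b <= x <-> a <= x /\ b <= x.
Proof. unfold Rmax; destruct (Rle_dec a b); split; intros; try lra. Qed.
Lemma lt_Rmin_iff a b x : x < Rmin a b <-> x < a /\ x < b.
Proof. unfold Rmin; destruct (Rle_dec a b); split; intros; try lra. Qed.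

Record ppiece := PP { pk : nat; pc : R; pd : R; pk' : nat; ps : R }.

Section Core.
Variable D : domain.

Definition valid (g : pt D -> pt D) (P : ppiece) : Prop :=
  forall p, comp p = pk P -> pc P <= coord p < pd P -> comp (g p) = pk' P /\ coord (g p) = coord p + ps P.
Definition in_pp (P : ppiece) (p : pt D) : Prop := comp p = pk P /\ pc P <= coord p < pd P.

Definition cut_in (P : ppiece) (l : list (nat * R * R)) : list (nat * R * R) :=
  flat_map (fun kcd => if Nat.eqb (fst (fst kcd)) (pk P)
     then (fst (fst kcd), Rmax (snd (fst kcd)) (pc P), Rmin (snd kcd) (pd P)) :: nil else nil) l.
Definition cut_out (P : ppiece) (l : list (nat * R * R)) : list (nat * R * R) :=
  flat_map (fun kcd => if Nat.eqb (fst (fst kcd)) (pk P)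
     then (fst (fst kcd), snd (fst kcd), Rmin (snd kcd) (pc P)) :: (fst (fst kcd), Rmax (snd (fst kcd)) (pd P), snd kcd) :: nil
     else kcd :: nil) l.

Lemma cut_in_ok (S : pset D) l P : (forall p, S p <-> arcs_of D l p) ->
  forall p, (S p /\ in_pp P p) <-> arcs_of D (cut_in P l) p.
Proof.
  intros HS p; split.
  - intros [Sp [Hk Hb]]. destruct (proj1 (HS p) Sp) as [kcd [Hin [Hc Hb']]].
    exists (fst (fst kcd), Rmax (snd (fst kcd)) (pc P), Rmin (snd kcd) (pd P)). split.
    + apply in_flat_map. exists kcd; split; [exact Hin|].
      replace (Nat.eqb (fst (fst kcd)) (pk P)) with true by (symmetry; apply Nat.eqb_eq; congruence). left; reflexivity.
    + simpl. split; [exact Hc|]. rewrite Rmax_le_iff, lt_Rmin_iff. lra.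
  - intros [kcd' [Hin [Hc Hb]]]. apply in_flat_map in Hin. destruct Hin as [kcd [Hin Hin']].
    destruct (Nat.eqb (fst (fst kcd)) (pk P)) eqn:E; [|destruct Hin'].
    destruct Hin' as [<-|[]]. apply Nat.eqb_eq in E. simpl in *.
    rewrite Rmax_le_iff, lt_Rmin_iff in Hb. split.
    + apply HS. exists kcd; split; [exact Hin|]. split; [exact Hc|lra].
    + split; [congruence|lra].
Qed.

Lemma cut_out_ok (S : pset D) l P : (forall p, S p <-> arcs_of D l p) ->
  forall p, (S p /\ ~ in_pp P p) <-> arcs_of D (cut_out P l) p.
Proof.
  intros HS p; split.
  - intros [Sp Hn]. destruct (proj1 (HS p) Sp) as [kcd [Hin [Hc Hb']]].
    destruct (Nat.eqb (fst (fst kcd)) (pk P)) eqn:E.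
    + apply Nat.eqb_eq in E.
      destruct (Rlt_dec (coord p) (pc P)) as [Hlt|Hge].
      * exists (fst (fst kcd), snd (fst kcd), Rmin (snd kcd) (pc P)). split.
        -- apply in_flat_map. exists kcd; split; [exact Hin|]. rewrite E, Nat.eqb_refl. left; reflexivity.
        -- simpl. split; [exact Hc|]. rewrite lt_Rmin_iff. lra.
      * assert (Hd : pd P <= coord p).
        { destruct (Rle_dec (pd P) (coord p)) as [H|H]; [exact H|]. exfalso; apply Hn. split; [congruence|lra]. }
        exists (fst (fst kcd), Rmax (snd (fst kcd)) (pd P), snd kcd). split.
        -- apply in_flat_map. exists kcd; split; [exact Hin|]. rewrite E, Nat.eqb_refl. right; left; reflexivity.
        -- simpl. split; [exact Hc|]. rewrite Rmax_le_iff. lra.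
    + exists kcd. split; [|split; assumption]. apply in_flat_map. exists kcd; split; [exact Hin|]. rewrite E. left; reflexivity.
  - intros [kcd' [Hin [Hc Hb]]]. apply in_flat_map in Hin. destruct Hin as [kcd [Hin Hin']].
    destruct (Nat.eqb (fst (fst kcd)) (pk P)) eqn:E.
    + apply Nat.eqb_eq in E. destruct Hin' as [<-|[<-|[]]]; simpl in *.
      * rewrite lt_Rmin_iff in Hb. split.
        -- apply HS. exists kcd; split; [exact Hin|]. split; [exact Hc|lra].
        -- intros [_ Hb']. lra.
      * rewrite Rmax_le_iff in Hb. split.
        -- apply HS. exists kcd; split; [exact Hin|]. split; [exact Hc|lra].
        -- intros [_ Hb']. lra.
    + destruct Hin' as [<-|[]]. split.
      * apply HS. exists kcd; split; [exact Hin|]. split; assumption.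
      * intros [Hk _]. apply Nat.eqb_neq in E. apply E; congruence.
Qed.

Variable g : pt D -> pt D.
Hypothesis ginj : forall x y, g x = g y -> x = y.

Lemma image_empty (S : pset D) : (forall p, ~ S p) -> au D (image g S) /\ mu D (image g S) = mu D S.
Proof.
  intros HS. assert (He : forall p, image g S p <-> (fun _ => False) p).
  { intros p; split; [intros [q [Sq _]]; exact (HS q Sq)|intros []]. }
  split.
  - destruct (au_empty D) as [l Hl]. exists l. intros p; rewrite He; apply Hl.
  - rewrite (mu_ext D _ _ He). rewrite <- (mu_ext D S (fun _ => False)); [reflexivity|].
    intros p; split; [apply HS|intros []].
Qed.

Lemma single (P : ppiece) (S : pset D) l : valid g P -> (forall p, S p <-> arcs_of D l p) ->
  (forall p, S p -> in_pp P p) -> au D (image g S) /\ mu D (image g S) = mu D S.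
Proof.
  intros HP HS Hin.
  destruct (classic (exists p, S p)) as [[p0 Sp0]|Hne]; [|apply image_empty; intros p Sp; apply Hne; exists p; exact Sp].
  pose proof (Hin p0 Sp0) as [Hk0 Hb0].
  pose proof (comp_lt D p0) as Hk. rewrite Hk0 in Hk.
  pose proof (HP p0 Hk0 Hb0) as [Hk0' _].
  pose proof (comp_lt D (g p0)) as Hk'. rewrite Hk0' in Hk'.
  set (k := pk P). set (k' := pk' P). set (s := ps P).
  assert (Hsl : forall x, slice D (image g S) k' x <-> Meas.U (map (Meas.sh s) (sl D l k)) x).
  { intros x; split.
    - intros [q [[p [Sp ->]] [Hc Hx]]]. destruct (Hin p Sp) as [Hpk Hpb]. destruct (HP p Hpk Hpb) as [_ Hco].
      assert (Hsp : slice D S k (coord p)) by (exists p; auto).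
      apply (slice_sl D S l k HS Hk) in Hsp. destruct Hsp as [cd [Hcd Hb]].
      exists (Meas.sh s cd). split; [apply in_map; exact Hcd|]. unfold Meas.sh; simpl. unfold s; lra.
    - intros [cd' [Hcd Hb]]. apply in_map_iff in Hcd. destruct Hcd as [cd [<- Hcd]]. unfold Meas.sh in Hb; simpl in Hb.
      assert (Hsp : slice D S k (x - s)) by (apply (slice_sl D S l k HS Hk); exists cd; split; [exact Hcd|lra]).
      destruct Hsp as [p [Sp [Hpc Hpx]]]. destruct (HP p Hpc (proj2 (Hin p Sp))) as [Hc Hco].
      exists (g p). split; [exists p; split; auto|]. split; [exact Hc|]. rewrite Hco, Hpx; unfold s; lra. }
  split.
  - exists (map (fun cd => (k', fst cd, snd cd)) (map (Meas.sh s) (sl D l k))). intros q; split.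
    + intros Hq. assert (Hs : slice D (image g S) k' (coord q)).
      { exists q; split; [exact Hq|split; [|reflexivity]]. destruct Hq as [p [Sp ->]].
        destruct (Hin p Sp) as [Hpk Hpb]. apply (HP p Hpk Hpb). }
      apply Hsl in Hs. destruct Hs as [cd [Hcd Hb]].
      exists (k', fst cd, snd cd). split; [apply in_map_iff; exists cd; split; [reflexivity|exact Hcd]|]. simpl. split; [|exact Hb].
      destruct Hq as [p [Sp ->]]. destruct (Hin p Sp) as [Hpk Hpb]. apply (HP p Hpk Hpb).
    + intros [kcd [Hkcd [Hc Hb]]]. apply in_map_iff in Hkcd. destruct Hkcd as [cd [<- Hcd]]. simpl in *.
      assert (Hs : slice D (image g S) k' (coord q)) by (apply Hsl; exists cd; split; auto).
      destruct Hs as [q' [Hq' [Hc' Hx']]]. replace q with q'; [exact Hq'|]. apply pt_eq; congruence.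
  - unfold mu.
    rewrite (rsum_single _ k' (ncomp D) 0), (rsum_single _ k (ncomp D) 0).
    + replace (Nat.leb 0 k' && Nat.ltb k' (0 + ncomp D))%bool with true
        by (symmetry; apply andb_true_intro; split; [apply Nat.leb_le|apply Nat.ltb_lt]; lia).
      replace (Nat.leb 0 k && Nat.ltb k (0 + ncomp D))%bool with true
        by (symmetry; apply andb_true_intro; split; [apply Nat.leb_le|apply Nat.ltb_lt]; lia).
      rewrite (Meas.m_ext _ _ Hsl), Meas.m_U_sh. symmetry. apply Meas.m_ext. apply slice_sl; auto.
    + intros j Hj. rewrite <- Meas.m_U_nil. apply Meas.m_ext. intros x; split; [|intros [cd [[] _]]].
      intros [p [Sp [Hpc _]]]. exfalso. apply Hj. rewrite <- Hpc. apply (Hin p Sp).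
    + intros j Hj. rewrite <- Meas.m_U_nil. apply Meas.m_ext. intros x; split; [|intros [cd [[] _]]].
      intros [q [[p [Sp ->]] [Hqc _]]]. exfalso. apply Hj. rewrite <- Hqc.
      destruct (Hin p Sp) as [Hpk Hpb]. apply (HP p Hpk Hpb).
Qed.

Lemma core (Ps : list ppiece) : (forall P, In P Ps -> valid g P) ->
  forall l (S : pset D), (forall p, S p <-> arcs_of D l p) -> (forall p, S p -> exists P, In P Ps /\ in_pp P p) ->
  au D (image g S) /\ mu D (image g S) = mu D S.
Proof.
  induction Ps as [|P Ps IH]; intros HV l S HS Hcov.
  - apply image_empty. intros p Sp. destruct (Hcov p Sp) as [P [[] _]].
  - set (S1 := fun p => S p /\ in_pp P p). set (S2 := fun p => S p /\ ~ in_pp P p).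
    destruct (single P S1 (cut_in P l)) as [A1 M1].
    { apply HV; left; reflexivity. }
    { apply cut_in_ok; exact HS. }
    { intros p [_ H]; exact H. }
    destruct (IH (fun Q HQ => HV Q (or_intror HQ)) (cut_out P l) S2) as [A2 M2].
    { apply cut_out_ok; exact HS. }
    { intros p [Sp Hn]. destruct (Hcov p Sp) as [Q [[<-|HQ] HQp]]; [contradiction|exists Q; auto]. }
    assert (Himg : forall p, image g S p <-> sunion D (image g S1) (image g S2) p).
    { intros p; split.
      - intros [q [Sq ->]]. destruct (classic (in_pp P q)) as [H|H]; [left|right]; exists q; split; auto; split; auto.
      - intros [[q [[Sq _] ->]]|[q [[Sq _] ->]]]; exists q; auto. }
    assert (Hdisj : disjoint (image g S1) (image g S2)).
    { intros p [[q1 [[_ H1] ->]] [q2 [[_ H2] E]]]. apply ginj in E. subst q2. contradiction. }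
    assert (HS12 : forall p, S p <-> sunion D S1 S2 p).
    { intros p; split; [intros Sp; destruct (classic (in_pp P p)); [left|right]; split; auto|intros [[Sp _]|[Sp _]]; auto]. }
    split.
    + replace (image g S) with (sunion D (image g S1) (image g S2)) by (symmetry; apply set_ext; exact Himg).
      apply au_union; assumption.
    + rewrite (mu_ext D _ _ Himg), (mu_ext D _ _ HS12), !mu_union; auto.
      * rewrite M1, M2; reflexivity.
      * exists (cut_in P l); apply cut_in_ok; exact HS.
      * exists (cut_out P l); apply cut_out_ok; exact HS.
      * intros p [[_ H1] [_ H2]]; contradiction.
Qed.

End Core.

Lemma Int_part_unique r n : IZR n <= r < IZR n + 1 -> Int_part r = n.
Proof.
  intros [H1 H2]. destruct (base_Int_part r) as [B1 B2].
  assert (IZR (n - 1) < IZR (Int_part r)) by (rewrite minus_IZR; simpl; lra).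
  assert (IZR (Int_part r) < IZR (n + 1)) by (rewrite plus_IZR; simpl; lra).
  apply lt_IZR in H; apply lt_IZR in H0. lia.
Qed.

Lemma Int_part_mono r1 r2 : r1 <= r2 -> (Int_part r1 <= Int_part r2)%Z.
Proof.
  intros H. destruct (base_Int_part r1) as [A1 A2]. destruct (base_Int_part r2) as [B1 B2].
  assert (IZR (Int_part r1) < IZR (Int_part r2 + 1)) by (rewrite plus_IZR; simpl; lra).
  apply lt_IZR in H0. lia.
Qed.

Lemma div_bounds L x a : 0 < L -> (a <= x / L <-> a * L <= x) /\ (x / L < a + 1 <-> x < (a + 1) * L).
Proof.
  intros HL. assert (Hx : x = (x / L) * L) by (field; lra). split; split; intros H.
  - rewrite Hx. apply Rmult_le_compat_r; lra.
  - apply Rmult_le_reg_r with L; [exact HL|]. rewrite <- Hx; exact H.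
  - rewrite Hx. apply Rmult_lt_compat_r; lra.
  - apply Rmult_lt_reg_r with L; [exact HL|]. rewrite <- Hx; exact H.
Qed.

Definition zrange (a b : Z) : list Z := map (fun i => (a + Z.of_nat i)%Z) (seq 0 (Z.to_nat (b - a + 1))).

Lemma zrange_in a b n : (a <= n <= b)%Z -> In n (zrange a b).
Proof.
  intros H. apply in_map_iff. exists (Z.to_nat (n - a)). split; [lia|]. apply in_seq. lia.
Qed.

Section IETpieces.
Variable D : domain.

Definition expand (pc : piece) : list ppiece :=
  if circ D (tgt pc) then
    map (fun n => PP (src pc) (Rmax (lo pc) (IZR n * len D (tgt pc) - Defs.shift pc))
                     (Rmin (hi pc) ((IZR n + 1) * len D (tgt pc) - Defs.shift pc)) (tgt pc)
                     (Defs.shift pc - IZR n * len D (tgt pc)))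
        (zrange (Int_part (Defs.shift pc / len D (tgt pc))) (Int_part ((len D (src pc) + Defs.shift pc) / len D (tgt pc))))
  else PP (src pc) (lo pc) (hi pc) (tgt pc) (Defs.shift pc) :: nil.

Lemma iet_pp (g : pt D -> pt D) : is_IET g ->
  exists Ps, (forall P, In P Ps -> valid D g P) /\ forall p, exists P, In P Ps /\ in_pp D P p.
Proof.
  intros [_ [pcs [Hcov Hform]]]. exists (flat_map expand pcs). split.
  - intros P HP. apply in_flat_map in HP. destruct HP as [pc [Hpc HP]].
    unfold expand in HP. destruct (circ D (tgt pc)) eqn:Ec.
    + apply in_map_iff in HP. destruct HP as [n [<- _]].
      intros p Hk Hb. simpl in *. rewrite Rmax_le_iff, lt_Rmin_iff in Hb.
      destruct (Hform pc Hpc p) as [Hc Hco]; [split; [exact Hk|lra]|].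
      split; [exact Hc|]. rewrite Hco. unfold wrap. rewrite Ec.
      assert (HL : 0 < len D (tgt pc)) by (apply len_pos; rewrite <- Hc; apply comp_lt).
      rewrite (Int_part_unique _ n); [lra|].
      destruct (div_bounds _ (coord p + Defs.shift pc) (IZR n) HL) as [[_ D1] [_ D2]]. split; [apply D1; lra|apply D2; lra].
    + destruct HP as [<-|[]]. intros p Hk Hb. simpl in *.
      destruct (Hform pc Hpc p) as [Hc Hco]; [split; [exact Hk|lra]|].
      split; [exact Hc|]. rewrite Hco. unfold wrap. rewrite Ec. reflexivity.
  - intros p. destruct (Hcov p) as [pc [Hpc [Hk Hb]]].
    destruct (Hform pc Hpc p (conj Hk Hb)) as [Hc Hco].
    destruct (circ D (tgt pc)) eqn:Ec.
    + assert (HL : 0 < len D (tgt pc)) by (apply len_pos; rewrite <- Hc; apply comp_lt).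
      set (n := Int_part ((coord p + Defs.shift pc) / len D (tgt pc))).
      destruct (base_Int_part ((coord p + Defs.shift pc) / len D (tgt pc))) as [B1 B2].
      fold n in B1, B2.
      pose proof (coord_bnd D p) as Hpb. rewrite Hk in Hpb.
      exists (PP (src pc) (Rmax (lo pc) (IZR n * len D (tgt pc) - Defs.shift pc))
                     (Rmin (hi pc) ((IZR n + 1) * len D (tgt pc) - Defs.shift pc)) (tgt pc)
                     (Defs.shift pc - IZR n * len D (tgt pc))). split.
      * apply in_flat_map. exists pc; split; [exact Hpc|]. unfold expand; rewrite Ec. apply in_map_iff.
        exists n; split; [reflexivity|]. apply zrange_in. split; apply Int_part_mono.
        -- apply Rmult_le_compat_r; [left; apply Rinv_0_lt_compat; exact HL|lra].
        -- apply Rmult_le_compat_r; [left; apply Rinv_0_lt_compat; exact HL|lra].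
      * split; [exact Hk|]. simpl. rewrite Rmax_le_iff, lt_Rmin_iff.
        destruct (div_bounds _ (coord p + Defs.shift pc) (IZR n) HL) as [[D1 _] [D2 _]].
        assert (IZR n * len D (tgt pc) <= coord p + Defs.shift pc) by (apply D1; lra).
        assert (coord p + Defs.shift pc < (IZR n + 1) * len D (tgt pc)) by (apply D2; lra).
        lra.
    + exists (PP (src pc) (lo pc) (hi pc) (tgt pc) (Defs.shift pc)). split.
      * apply in_flat_map. exists pc; split; [exact Hpc|]. unfold expand; rewrite Ec. left; reflexivity.
      * split; [exact Hk|exact Hb].
Qed.

Lemma iet_image (g : pt D -> pt D) (S : pset D) : is_IET g -> au D S -> au D (image g S) /\ mu D (image g S) = mu D S.
Proof.
  intros Hg [l Hl]. destruct (iet_pp g Hg) as [Ps [HV Hcov]].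
  apply (core D g (bij_inj D g (proj1 Hg)) Ps HV l S Hl). intros p _; apply Hcov.
Qed.

End IETpieces.

Section Fin.
Variable D : domain.
Variable G : (pt D -> pt D) -> Prop.
Variable a : pt D -> pt D.
Variable Is : list (pset D).
Hypothesis HG : is_subgroup G.
Hypothesis HIET : forall g, G g -> is_IET g.
Hypothesis Ga : G a.
Hypothesis Hst : stable (cyclic a).
Hypothesis Hcomp : irreducible_components (cyclic a) Is.
Hypothesis Hcm : forall g ginv, G g -> (forall p, ginv (g p) = p) -> (forall p, g (ginv p) = p) ->
     forall p, g (a (ginv (a p))) = a (g (a (ginv p))).

Lemma HAU : forall g, G g -> forall S, au D S -> au D (image g S).
Proof. intros g Gg S HS. apply (iet_image D g S (HIET g Gg) HS). Qed.

Definition Ugs (I : pset D) (gs : list (pt D -> pt D)) : pset D := fun p => exists h, In h gs /\ image h I p.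

Lemma fin_images I : In I Is -> exists L, forall g, G g -> exists S, In S L /\ seteq (image g I) S.
Proof.
  intros HI. apply NNPP; intros Hno.
  pose proof (comp_au D a Is Hcomp I HI) as AI.
  pose proof (comp_ne D a Is Hcomp I HI) as NI.
  set (c0 := mu D I).
  assert (Hc0 : 0 < c0) by (apply mu_pos; assumption).
  assert (Hmu : forall g, G g -> mu D (image g I) = c0) by (intros g Gg; apply (iet_image D g I (HIET g Gg) AI)).
  assert (Hj : forall j, exists gs, length gs = j /\ (forall h, In h gs -> G h) /\ au D (Ugs I gs) /\ mu D (Ugs I gs) = INR j * c0).
  { induction j as [|j [gs [Hl [HGs [HA HM]]]]].
    - exists nil. assert (He : forall p, Ugs I nil p <-> (fun _ => False) p) by (intros p; split; [intros [h [[] _]]|intros []]).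
      split; [reflexivity|split; [intros h []|split]].
      + destruct (au_empty D) as [l Hl]. exists l. intros p; rewrite He; apply Hl.
      + rewrite (mu_ext D _ _ He), mu_empty. simpl; lra.
    - destruct (classic (forall g, G g -> exists S, In S (map (fun h => image h I) gs) /\ seteq (image g I) S)) as [Hall|Hn].
      { exfalso; apply Hno; exists (map (fun h => image h I) gs); exact Hall. }
      apply not_all_ex_not in Hn. destruct Hn as [g Hg].
      apply imply_to_and in Hg. destruct Hg as [Gg Hg].
      assert (Hdisj : disjoint (image g I) (Ugs I gs)).
      { intros p [Hp [h [Hh Hhp]]].
        destruct (concl3 D G a Is HG HIET Ga Hst Hcomp Hcm HAU g h I Gg (HGs h Hh) HI) as [E|E].
        - apply Hg. exists (image h I). split; [apply in_map_iff; exists h; split; [reflexivity|exact Hh]|]. rewrite E. intros q; tauto.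
        - apply (E p); auto. }
      assert (HU : forall p, Ugs I (g :: gs) p <-> sunion D (image g I) (Ugs I gs) p).
      { intros p; split.
        - intros [h [[<-|Hh] Hp]]; [left; exact Hp|right; exists h; auto].
        - intros [Hp|[h [Hh Hp]]]; [exists g; split; [left; reflexivity|exact Hp]|exists h; split; [right; exact Hh|exact Hp]]. }
      exists (g :: gs). split; [simpl; lia|split; [intros h [<-|Hh]; [exact Gg|apply HGs; exact Hh]|split]].
      + destruct (au_union D _ _ (HAU g Gg I AI) HA) as [l0 Hl0]. exists l0. intros p; rewrite HU; apply Hl0.
      + rewrite (mu_ext D _ _ HU), mu_union; [|apply HAU; assumption|exact HA|exact Hdisj].
        rewrite Hmu, HM by exact Gg. rewrite S_INR. lra. }
  destruct (INR_unbounded (total D / c0)) as [M HM].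
  destruct (Hj M) as [gs [_ [_ [HA HMu]]]].
  pose proof (mu_le_total D _ HA) as Ht. rewrite HMu in Ht.
  assert (total D / c0 * c0 = total D) by (field; lra).
  assert (total D / c0 * c0 < INR M * c0) by (apply Rmult_lt_compat_r; lra).
  lra.
Qed.

End Fin.

Theorem mainTheorem12 (D : domain) (G : (pt D -> pt D) -> Prop)
  (a : pt D -> pt D) (Is : list (pset D)) :
  is_subgroup G ->
  (forall g, G g -> is_IET g) ->
  G a ->
  stable (cyclic a) ->
  irreducible_components (cyclic a) Is ->
  (forall g ginv, G g -> (forall p, ginv (g p) = p) -> (forall p, g (ginv p) = p) ->
     forall p, g (a (ginv (a p))) = a (g (a (ginv p)))) ->
  forall I, In I Is ->
    (exists L : list (pset D), forall g, G g -> exists S, In S L /\ seteq (image g I) S) /\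
    (forall g, G g -> subdomain (image g I)) /\
    (forall g h, G g -> G h ->
       seteq (image g I) (image h I) \/ disjoint (image g I) (image h I)).
Proof.
  intros HG HIET Ga Hst Hcomp Hcm I HI.
  pose proof (HAU D G HIET) as Hau.
  split; [|split].
  - apply (fin_images D G a Is HG HIET Ga Hst Hcomp Hcm I HI).
  - intros g Gg. split.
    + destruct (comp_ne D a Is Hcomp I HI) as [q Iq]. exists (g q), q; split; auto.
    + apply (Hau g Gg I (comp_au D a Is Hcomp I HI)).
  - intros g h Gg Gh.
    destruct (concl3 D G a Is HG HIET Ga Hst Hcomp Hcm Hau g h I Gg Gh HI) as [E|E].
    + left. rewrite E. intros p; tauto.
    + right; exact E.
Qed.
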